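(* Let $S$ be a Foulis semigroup and $s\in S$ a self-adjoint idempotent ($s\cdot s=s=s^\dagger$). Then $\mathrm{End}(s)=\{t\in S: s\cdot t=t=t\cdot s\}$, with multiplication of $S$, unit $s$, involution $\dagger$, and $[t]_s=s\cdot[t]\cdot s$, is a Foulis semigroup; it coincides with the endomorphism Foulis semigroup of the object $s$ in the dagger kernel category $\mathrm{Kar}_\dagger(S)$. For $s=1$ one recovers $\mathrm{End}(1)=S$.
   Context: A Foulis semigroup is a monoid $(S,\cdot,1)$ with maps $(-)^\dagger:S\to S$ and $[-]:S\to S$ such that: (1) $1^\dagger=1$, $(s\cdot t)^\dagger=t^\dagger\cdot s^\dagger$, $s^{\dagger\dagger}=s$; (2) $[s]\cdot[s]=[s]=[s]^\dagger$; (3) $0:=[1]$ satisfies $0\cdot s=0=s\cdot 0$ for all $s$; (4) for all $s,x$: $s\cdot x=0$ iff $x=[s]\cdot y$ for some $y\in S$. $\mathrm{Kar}_\dagger(S)$ is the category whose objects are self-adjoint idempotents of $S$, whose morphisms $f:s\to t$ are elements $f\in S$ with $f\cdot s=f=t\cdot f$, with composition the multiplication, identity on $s$ equal to $s$, dagger the involution; it is a dagger kernel category in which the kernel of $f:s\to t$ is $s\cdot[f]$. In a dagger kernel category the endomorphisms of an object form a Foulis semigroup with $[u]=\ker(u)\circ\ker(u)^\dagger$. *)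

(* Defs.v *)
From Stdlib Require Import Setoid.

Definition is_foulis {T : Type} (mul : T -> T -> T) (one : T)
    (dag : T -> T) (br : T -> T) : Prop :=
  (forall x y z, mul x (mul y z) = mul (mul x y) z) /\
  (forall x, mul one x = x) /\ (forall x, mul x one = x) /\
  dag one = one /\
  (forall x y, dag (mul x y) = mul (dag y) (dag x)) /\
  (forall x, dag (dag x) = x) /\
  (forall x, mul (br x) (br x) = br x /\ br x = dag (br x)) /\
  (* (3) 0 := [1] is absorbing *)
  (forall x, mul (br one) x = br one /\ mul x (br one) = br one) /\
  (forall s x, mul s x = br one <-> exists y, x = mul (br s) y).

Record Foulis := {
  fcar :> Type;
  fmul : fcar -> fcar -> fcar;
  fone : fcar;
  fdag : fcar -> fcar;
  fbr  : fcar -> fcar;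
  fax  : is_foulis fmul fone fdag fbr
}.

Section EndDef.
Variable S : Foulis.

Lemma f_assoc (x y z : S) : fmul S x (fmul S y z) = fmul S (fmul S x y) z.
Proof. destruct (fax S) as [H _]. apply H. Qed.

Lemma f_dagM (x y : S) : fdag S (fmul S x y) = fmul S (fdag S y) (fdag S x).
Proof. destruct (fax S) as [_ [_ [_ [_ [H _]]]]]. apply H. Qed.

Definition in_End (s t : S) : Prop := fmul S s t = t /\ fmul S t s = t.

Definition End_car (s : S) : Type := { t : S | in_End s t }.

Variables (s : S) (hss : fmul S s s = s) (hsd : fdag S s = s).

Lemma End_mul_in (t u : S) : in_End s t -> in_End s u -> in_End s (fmul S t u).
Proof.
  intros [h1 h2] [k1 k2]; split.
  - rewrite f_assoc, h1; reflexivity.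
  - rewrite <- f_assoc, k2; reflexivity.
Qed.

Lemma End_one_in : in_End s s.
Proof. split; exact hss. Qed.

Lemma End_dag_in (t : S) : in_End s t -> in_End s (fdag S t).
Proof.
  intros [h1 h2]; split.
  - rewrite <- hsd. rewrite <- f_dagM, h2; reflexivity.
  - rewrite <- hsd. rewrite <- f_dagM, h1; reflexivity.
Qed.

Lemma End_br_in (t : S) : in_End s (fmul S (fmul S s (fbr S t)) s).
Proof.
  split.
  - rewrite !f_assoc, hss; reflexivity.
  - rewrite <- f_assoc, hss; reflexivity.
Qed.

Definition End_mul (t u : End_car s) : End_car s :=
  exist _ (fmul S (proj1_sig t) (proj1_sig u))
        (End_mul_in _ _ (proj2_sig t) (proj2_sig u)).
Definition End_one : End_car s := exist _ s End_one_in.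
Definition End_dag (t : End_car s) : End_car s :=
  exist _ (fdag S (proj1_sig t)) (End_dag_in _ (proj2_sig t)).
Definition End_br (t : End_car s) : End_car s :=
  exist _ (fmul S (fmul S s (fbr S (proj1_sig t))) s) (End_br_in (proj1_sig t)).
End EndDef.

(* In Kar_dagger(S), the kernel of f : s -> t is the morphism s.[f]
   (given in the paper's context); its dagger is fdag, composition is fmul. *)
Definition kar_ker (S : Foulis) (s f : S) : S := fmul S s (fbr S f).

(* Foulis bracket of the endomorphism semigroup of object s in a dagger
   kernel category: [u] = ker(u) o ker(u)^dagger. *)
Definition kar_End_br (S : Foulis) (s u : S) : S :=
  fmul S (kar_ker S s u) (fdag S (kar_ker S s u)).

(* Main.v *)
Require Import Defs.
From Stdlib Require Import ProofIrrelevance Setoid.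

Section L.
Variable S : Foulis.
Notation m := (fmul S).
Notation d := (fdag S).
Notation b := (fbr S).
Notation o := (fone S).

Lemma A1 x y z : m x (m y z) = m (m x y) z. Proof. apply (proj1 (fax S)). Qed.
Lemma A2 x : m o x = x. Proof. apply (fax S). Qed.
Lemma A3 x : m x o = x. Proof. apply (fax S). Qed.
Lemma A4 : d o = o. Proof. apply (fax S). Qed.
Lemma A5 x y : d (m x y) = m (d y) (d x). Proof. apply (fax S). Qed.
Lemma A6 x : d (d x) = x. Proof. apply (fax S). Qed.
Lemma A7 x : m (b x) (b x) = b x. Proof. destruct (fax S) as [_ [_ [_ [_ [_ [_ [H _]]]]]]]; apply H. Qed.
Lemma A8 x : b x = d (b x). Proof. destruct (fax S) as [_ [_ [_ [_ [_ [_ [H _]]]]]]]; apply H. Qed.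
Lemma A9 x : m (b o) x = b o. Proof. destruct (fax S) as [_ [_ [_ [_ [_ [_ [_ [H _]]]]]]]]; apply H. Qed.
Lemma A10 x : m x (b o) = b o. Proof. destruct (fax S) as [_ [_ [_ [_ [_ [_ [_ [H _]]]]]]]]; apply H. Qed.
Lemma A11 s x : m s x = b o <-> exists y, x = m (b s) y.
Proof. destruct (fax S) as [_ [_ [_ [_ [_ [_ [_ [_ H]]]]]]]]. apply H. Qed.

Lemma kill t : m t (b t) = b o.
Proof. apply A11. exists o. rewrite A3. reflexivity. Qed.

Lemma comm s t : d s = s -> m t s = t -> m s (b t) = m (b t) s /\ m s (b t) = m (m (b t) s) (b t).
Proof.
  intros hd ht.
  assert (H : m t (m s (b t)) = b o) by (rewrite A1, ht; apply kill).
  apply A11 in H. destruct H as [y Hy].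
  assert (E : m (m (b t) s) (b t) = m s (b t)).
  { rewrite <- A1, Hy, A1, A7. reflexivity. }
  split; [|symmetry; exact E].
  assert (Hd : d (m (m (b t) s) (b t)) = m (m (b t) s) (b t)).
  { rewrite !A5, <- !A8, hd, A1. reflexivity. }
  rewrite <- E. rewrite <- Hd at 1. rewrite E, A5, <- A8, hd. reflexivity.
Qed.
End L.

Lemma sig_ext (S : Foulis) (s : S) (a c : End_car S s) : proj1_sig a = proj1_sig c -> a = c.
Proof.
  destruct a as [a pa], c as [c pc]; simpl; intros ->. f_equal. apply proof_irrelevance.
Qed.

Theorem mainTheorem17 (S : Foulis) (s : S)
    (hss : fmul S s s = s) (hsd : fdag S s = s) :
  (* End(s) is a Foulis semigroup *)
  is_foulis (@End_mul S s) (@End_one S s hss) (@End_dag S s hsd) (@End_br S s hss)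
  /\ (* it is the endomorphism Foulis semigroup of s in Kar_dagger(S):
        same carrier (morphisms s -> s), composition, identity s, dagger,
        and bracket ker(t) o ker(t)^dagger *)
  (forall t : End_car S s,
      proj1_sig (@End_br S s hss t) = kar_End_br S s (proj1_sig t))
  /\ (* for s = 1 one recovers S *)
  (forall t : S, in_End S (fone S) t)
  /\ (forall t : S, fmul S (fmul S (fone S) (fbr S t)) (fone S) = fbr S t).
Proof.
  assert (K : forall t, fmul S t s = t ->
            fmul S (fmul S s (fbr S t)) s = fmul S s (fbr S t)
            /\ fmul S s (fbr S t) = fmul S (fbr S t) s).
  { intros t ht. destruct (comm S s t hsd ht) as [E1 E2].
    split; [|exact E1]. rewrite E1, <- A1, hss. reflexivity. }
  assert (Z : fmul S (fmul S s (fbr S s)) s = fbr S (fone S)).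
  { rewrite kill, A9. reflexivity. }
  split; [|split; [|split]].
  - unfold is_foulis.
    refine (conj _ (conj _ (conj _ (conj _ (conj _ (conj _ (conj _ (conj _ _)))))))).
    + intros [x px] [y py] [z pz]; apply sig_ext; simpl; apply A1.
    + intros [x0 [p1 p2]]; apply sig_ext; simpl; exact p1.
    + intros [x0 [p1 p2]]; apply sig_ext; simpl; exact p2.
    + apply sig_ext; simpl; exact hsd.
    + intros [x px] [y py]; apply sig_ext; simpl; apply A5.
    + intros [x px]; apply sig_ext; simpl; apply A6.
    + intros [x [p1 p2]]; split; apply sig_ext; simpl.
      { destruct (K x p2) as [E1 E2]. rewrite E1.
      rewrite E2 at 2. rewrite A1, <- (A1 S s (fbr S x)), A7, E1.
      reflexivity. }
      destruct (K x p2) as [E1 E2]. rewrite E1.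
      rewrite A5, <- A8, hsd. exact E2.
    + intros [x [p1 p2]]; split; apply sig_ext; simpl; rewrite Z; [apply A9|apply A10].
    + intros u x; split.
      intros H. destruct u as [u [u1 u2]], x as [x [x1 x2]].
      apply (f_equal (@proj1_sig _ _)) in H. simpl in H. rewrite Z in H.
      apply A11 in H. destruct H as [z Hz].
      exists (exist _ x (conj x1 x2)). apply sig_ext; simpl.
      destruct (K u u2) as [E1 E2]. rewrite E1.
      rewrite <- x1 at 1. rewrite Hz, !A1, <- (A1 S s (fbr S u) (fbr S u)), A7.
      reflexivity.
      intros [y Hy]. destruct u as [u [u1 u2]], x as [x [x1 x2]], y as [y [y1 y2]].
      apply (f_equal (@proj1_sig _ _)) in Hy. simpl in Hy.
      apply sig_ext; simpl. rewrite Z.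
      destruct (K u u2) as [E1 E2]. rewrite E1 in Hy. rewrite Hy.
      rewrite !A1, u2, kill, A9. reflexivity.
  - intros [t [t1 t2]]; simpl. unfold kar_End_br, kar_ker.
    destruct (K t t2) as [E1 E2]. rewrite E1.
    rewrite A5, <- A8, hsd, A1, <- (A1 S s (fbr S t)), A7, E1. reflexivity.
  - intros t; split; [apply A2|apply A3].
  - intros t; rewrite A2, A3; reflexivity.
Qed.
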